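(* Let $d\ge1$, $t\ge1$ be integers and let $\mu_t$ be a finite Borel measure on $\mathbb S^d$ satisfying the lower Marcinkiewicz–Zygmund inequality of order $t$ with constant $a>0$, i.e. $a\|f\|_{L^2(\mathbb S^d)}^2\le\int_{\mathbb S^d}|f|^2\,d\mu_t$ for all $f\in\Pi_t$. Let $r\in(0,\pi/2]$ and $x\in\mathbb S^d$. If $\operatorname{supp}\mu_t\subseteq B_r(x)$, then \[ (\sin r)^{2t}\ge \frac{a}{\mu_t(\mathbb S^d)}\,\Lambda_{d,t},\qquad\text{where }\Lambda_{d,t}:=\int_{\mathbb S^d}(x\cdot y)^{2t}\,dy . \]
   Context: $\mathbb S^d\subset\mathbb R^{d+1}$ is the unit sphere with normalized surface measure $dy$ (total mass $1$); $\Lambda_{d,t}$ does not depend on $x\in\mathbb S^d$. $B_r(x)=\{y\in\mathbb S^d:x\cdot y\ge\cos r\}$. $\Pi_t$ is the space of restrictions to $\mathbb S^d$ of polynomials in $d+1$ variables of degree at most $t$. *)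

(* Defs.v *)
From HB Require Import structures.
From mathcomp Require Import all_boot all_order all_algebra.
From mathcomp Require Import mpoly.
From mathcomp Require Import all_classical all_reals all_analysis.

Set Implicit Arguments.
Unset Strict Implicit.
Unset Printing Implicit Defensive.

Import Order.TTheory GRing.Theory Num.Theory.
Import numFieldNormedType.Exports.
Local Open Scope classical_set_scope.
Local Open Scope ring_scope.

(* Ambient space R^(d+1) = 'rV[R]_(d.+1), equipped with its Borel
   sigma-algebra (generated by the open sets of the product topology). *)
Notation Rsp R d := (g_sigma_algebraType (@open 'rV[R]_(d.+1))).

Definition dotp (R : realType) (n : nat) (x y : 'rV[R]_n) : R :=
  \sum_(i < n) x 0 i * y 0 i.
Definition sqnorm (R : realType) (n : nat) (x : 'rV[R]_n) : R := dotp x x.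

Definition sphere (R : realType) (d : nat) : set 'rV[R]_(d.+1) :=
  [set y | sqnorm y = 1].
Arguments sphere {R} d.

Definition cap (R : realType) (d : nat) (r : R) (x : 'rV[R]_(d.+1))
  : set 'rV[R]_(d.+1) :=
  [set y | sphere d y /\ cos r <= dotp x y].
Arguments cap {R} d r x.

Definition msupport (R : realType) (d : nat)
  (mu : set (Rsp R d) -> \bar R) : set 'rV[R]_(d.+1) :=
  [set y | forall U : set 'rV[R]_(d.+1), open U -> U y -> (0 < mu U)%E].

(* Lebesgue integral over R^n of a [0,+oo]-valued function, written as the
   iterated one-dimensional Lebesgue integral (Tonelli). *)
Fixpoint iter_int (R : realType) (n : nat) : ('rV[R]_n -> \bar R) -> \bar R :=
  match n with
  | 0 => fun F => F 0
  | n'.+1 => fun F : 'rV[R]_(n'.+1) -> \bar R =>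
      (\int[@lebesgue_measure R]_(x in [set: R])
         iter_int (fun v : 'rV[R]_n' =>
           F (row_mx (const_mx (x : R) : 'rV[R]_1) v)))%E
  end.

Definition unit_ball (R : realType) (n : nat) : set 'rV[R]_n :=
  [set y | sqnorm y <= 1].
Definition radproj (R : realType) (n : nat) (y : 'rV[R]_n) : 'rV[R]_n :=
  (Num.sqrt (sqnorm y))^-1 *: y.

(* Integral against the normalized surface measure of S^d (total mass 1),
   for nonnegative integrands, via the cone-measure formula
   sigma(A) = vol{ s y : 0 < s <= 1, y in A } / vol(unit ball). *)
Definition sphere_int (R : realType) (d : nat)
  (g : 'rV[R]_(d.+1) -> \bar R) : \bar R :=
  ((fine (iter_int (fun y : 'rV[R]_(d.+1) =>
            if `[< unit_ball y >] then 1%E else 0%E)))^-1%:E *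
   iter_int (fun y : 'rV[R]_(d.+1) =>
            if `[< unit_ball y >] then g (radproj y) else 0%E))%E.
Arguments sphere_int {R} d g.

(* Pi_t : (restrictions to S^d of) real polynomials in d+1 variables of total
   degree at most t.  (msize p = 1 + total degree of p, msize 0 = 0.) *)
Definition Pi_t (R : realType) (d t : nat) : set ({mpoly R[d.+1]}) :=
  [set p | (msize p <= t.+1)%N].
Arguments Pi_t {R} d t.

Definition peval (R : realType) (d : nat) (p : {mpoly R[d.+1]})
  (y : 'rV[R]_(d.+1)) : R := meval (fun i => y 0 i) p.

Definition Lambda (R : realType) (d t : nat) (x : 'rV[R]_(d.+1)) : \bar R :=
  sphere_int d (fun y => ((dotp x y) ^+ (2 * t))%:E).
Arguments Lambda {R} d t x.

Definition lower_MZ (R : realType) (d t : nat) (a : R)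
  (mu : {measure set (Rsp R d) -> \bar R}) : Prop :=
  forall p : {mpoly R[d.+1]}, Pi_t d t p ->
    (a%:E * sphere_int d (fun y => ((peval p y) ^+ 2)%:E)
     <= \int[mu]_(y in (sphere d : set (Rsp R d))) ((peval p y) ^+ 2)%:E)%E.
Arguments lower_MZ {R} d t a mu.

(* Main.v *)
Require Import Defs.
From HB Require Import structures.
From mathcomp Require Import all_boot all_order all_algebra.
From mathcomp Require Import mpoly.
From mathcomp Require Import all_classical all_reals all_analysis.
Import Order.TTheory GRing.Theory Num.Theory.
Import numFieldNormedType.Exports.
From mathcomp Require Import measurable_realfun.
From mathcomp Require Import ring lra.
Set Implicit Arguments.
Unset Strict Implicit.
Unset Printing Implicit Defensive.
Local Open Scope classical_set_scope.
Local Open Scope ring_scope.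


Section Shift.
Variable R : realType.
Local Notation mu := (@lebesgue_measure R).

Lemma measurable_shift (c : R) : measurable_fun setT (fun x : R => x + c).
Proof. apply: continuous_measurable_fun => x; exact: (@cvgD _ _ _ _ _ _ _ _ _ (cvg_id) (cvg_cst c)). Qed.

Lemma measurable_shift' (c : R) : measurable_fun setT ((fun x : R => x + c) : measurableTypeR R -> measurableTypeR R).
Proof. exact: measurable_shift. Qed.

Lemma lebesgue_measure_shift (c : R) (A : set R) : measurable A ->
  pushforward mu ((fun x : R => x + c) : _ -> measurableTypeR R) A = mu A.
Proof.
move=> mA; apply/esym/lebesgue_measure_unique => //=.
  exact: measurable_shift.
move=> _ _ [[a b]] _ <-.
rewrite /pushforward.
have -> : (fun x : R => x + c) @^-1` `]a, b]%classic = `](a - c), (b - c)]%classic.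
  apply/seteqP; split => x /=; rewrite !in_itv /= ?lerBrDr ?ltrBlDr //.
rewrite !lebesgue_measure_itv/= !lte_fin ltrD2r -!EFinB.
by congr (if _ then _ else _); congr EFin; rewrite opprB addrA subrK.
Qed.

Lemma integral_shift (c : R) (f : R -> \bar R) :
  measurable_fun setT f -> (forall x, (0 <= f x)%E) ->
  (\int[mu]_x f ((x : R) + c)%R = \int[mu]_x f x)%E.
Proof.
move=> mf f0.
have -> : (\int[mu]_x f ((x : R) + c)%R = \int[mu]_(x in (fun x : R => (x + c)%R) @^-1` setT) (f \o (fun x : R => (x + c)%R)) x)%E by [].
rewrite -(@ge0_integral_pushforward _ _ _ _ R _ (measurable_shift' c) mu setT f) //.
have h := @eq_measure_integral _ _ R setT mu (measure_function_pushforward__canonical__measure_function_Measure mu (measurable_shift' c)) f.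
apply: h => /= A mA _; exact: lebesgue_measure_shift.
Qed.
End Shift.

Section Infra.
Variable R : realType.

Definition rc0 {m} (x : R) (w : 'rV[R]_m) : 'rV[R]_(m.+1) :=
  row_mx (const_mx x : 'rV[R]_1) w.

Fixpoint pm (m : nat) : forall (dP : measure_display) (P : measurableType dP)
   (dV : measure_display) (V : measurableType dV), (P -> 'rV[R]_m -> V) -> Prop :=
  match m with
  | 0 => fun dP P dV V G => measurable_fun setT (fun p => G p 0)
  | m'.+1 => fun dP P dV V G =>
      @pm m' _ (P * measurableTypeR R)%type dV V (fun pq w => G pq.1 (rc0 pq.2 w))
  end.
Arguments pm {m dP P dV V} G.

Lemma pm_cst m dP (P : measurableType dP) dV (V : measurableType dV) (g : P -> V) :
  measurable_fun setT g -> @pm m _ P _ V (fun p _ => g p).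
Proof.
elim: m dP P g => [|m IH] dP P g mg //=.
apply: IH; exact: measurableT_comp.
Qed.

Lemma pm_compP m dP (P : measurableType dP) dQ (Q : measurableType dQ)
  dV (V : measurableType dV) (phi : Q -> P) (G : P -> 'rV[R]_m -> V) :
  measurable_fun setT phi -> pm G -> pm (fun q => G (phi q)).
Proof.
elim: m dP P dQ Q phi G => [|m IH] dP P dQ Q phi G mphi /= hG.
  exact: (measurableT_comp hG mphi).
pose psi := fun qx : Q * measurableTypeR R => (phi qx.1, qx.2).
have mpsi : measurable_fun setT psi.
  apply: measurable_fun_pair; last exact: measurable_snd.
  exact: (measurableT_comp mphi measurable_fst).
exact: (IH _ _ _ _ psi _ mpsi hG).
Qed.

Lemma pm_re m dP (P : measurableType dP) dQ (Q : measurableType dQ)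
  dV (V : measurableType dV) (phi : Q -> P) (G : P -> 'rV[R]_m -> V)
  (G2 : Q -> 'rV[R]_m -> V) :
  measurable_fun setT phi -> (forall q w, G2 q w = G (phi q) w) -> pm G -> pm G2.
Proof.
move=> mphi E hG.
have -> : G2 = (fun q => G (phi q)) by apply/funext => q; apply/funext => w; exact: E.
exact: pm_compP.
Qed.

Lemma pm_map m dP (P : measurableType dP) dV (V : measurableType dV)
  dW (W : measurableType dW) (h : V -> W) (G : P -> 'rV[R]_m -> V) :
  measurable_fun setT h -> pm G -> pm (fun p y => h (G p y)).
Proof.
elim: m dP P G => [|m IH] dP P G mh /= hG; first exact: measurableT_comp.
exact: IH.
Qed.

Lemma pm_map2 m dP (P : measurableType dP) d1 (V1 : measurableType d1)
  d2 (V2 : measurableType d2) d3 (V3 : measurableType d3)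
  (op : V1 -> V2 -> V3)
  (Hop : forall dQ (Q : measurableType dQ) (f : Q -> V1) (g : Q -> V2),
     measurable_fun setT f -> measurable_fun setT g ->
     measurable_fun setT (fun q => op (f q) (g q)))
  (G1 : P -> 'rV[R]_m -> V1) (G2 : P -> 'rV[R]_m -> V2) :
  pm G1 -> pm G2 -> pm (fun p y => op (G1 p y) (G2 p y)).
Proof.
elim: m dP P G1 G2 => [|m IH] dP P G1 G2 /= h1 h2; first exact: Hop.
exact: IH.
Qed.

Lemma rc0_ord0 m x (w : 'rV[R]_m) : rc0 x w 0 ord0 = x.
Proof.
rewrite /rc0.
have -> : (ord0 : 'I_(m.+1)) = lshift m (ord0 : 'I_1) by apply: val_inj.
by apply: etrans (row_mxEl _ _ _ _) _; rewrite mxE.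
Qed.

Lemma rc0_lift m x (w : 'rV[R]_m) j : rc0 x w 0 (lift ord0 j) = w 0 j.
Proof.
rewrite /rc0.
have -> : (lift ord0 j : 'I_(m.+1)) = rshift 1 j by apply: val_inj.
exact: (row_mxEr (const_mx x : 'M[R]_(1,1)) w 0 j).
Qed.

Lemma pm_coord m dP (P : measurableType dP) (i : 'I_m) :
  pm (fun (p : P) (y : 'rV[R]_m) => y 0 i).
Proof.
elim: m dP P i => [|m IH] dP P i; first by case: i.
rewrite /=.
case: (unliftP ord0 i) => [j ->|->].
  have E : (fun (pq : P * measurableTypeR R) (w : 'rV[R]_m) => rc0 pq.2 w 0 (lift ord0 j))
     = (fun pq w => w 0 j).
    by apply/funext=> pq; apply/funext=> w; exact: rc0_lift.
  rewrite E; exact: IH.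
have E : (fun (pq : P * measurableTypeR R) (w : 'rV[R]_m) => rc0 pq.2 w 0 ord0)
     = (fun pq w => pq.2).
  by apply/funext=> pq; apply/funext=> w; exact: rc0_ord0.
rewrite E; apply: pm_cst; exact: measurable_snd.
Qed.


Local Open Scope ereal_scope.

Lemma iter_int_ge0 m (G : 'rV[R]_m -> \bar R) :
  (forall y, 0 <= G y) -> 0 <= iter_int G.
Proof.
elim: m G => [|m IH] G G0 /=; first exact: G0.
apply: integral_ge0 => x _; apply: IH => w; exact: G0.
Qed.

Lemma iter_int_meas m dP (P : measurableType dP) (G : P -> 'rV[R]_m -> \bar R) :
  pm G -> (forall p y, 0 <= G p y) ->
  measurable_fun setT (fun p => iter_int (G p)).
Proof.
elim: m dP P G => [|m IH] dP P G /= hG G0; first exact: hG.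
have := IH _ _ _ hG (fun pq w => G0 pq.1 _).
move=> mF.
apply: (measurable_fun_fubini_tonelli_F (m2 := @lebesgue_measure R) _ mF).
move=> pq; apply: iter_int_ge0 => w; exact: G0.
Qed.


Local Notation mu := (@lebesgue_measure R).

Lemma iter_intS m (G : 'rV[R]_(m.+1) -> \bar R) :
  iter_int G = (\int[mu]_x iter_int (fun w => G (rc0 x w)))%E.
Proof. by []. Qed.

Local Close Scope ereal_scope.
Definition hd {m} (y : 'rV[R]_(m.+1)) : R := y 0 ord0.
Definition tl {m} (y : 'rV[R]_(m.+1)) : 'rV[R]_m := rsubmx (y : 'M[R]_(1, 1 + m)).

Lemma hd_rc0 m x (w : 'rV[R]_m) : hd (rc0 x w) = x.
Proof. exact: rc0_ord0. Qed.

Lemma tl_rc0 m x (w : 'rV[R]_m) : tl (rc0 x w) = w.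
Proof. exact: row_mxKr. Qed.

Lemma rc0_hd_tl m (y : 'rV[R]_(m.+1)) : rc0 (hd y) (tl y) = y.
Proof.
apply/rowP => i.
case: (unliftP ord0 i) => [j ->|->]; last by rewrite rc0_ord0.
rewrite rc0_lift /tl mxE; congr (y _ _); exact: val_inj.
Qed.

Definition tpm {m} (G : 'rV[R]_m -> \bar R) := pm (fun (_ : measurableTypeR R) y => G y).
Definition Inv m (T : 'rV[R]_m -> 'rV[R]_m) := forall G : 'rV[R]_m -> \bar R,
  tpm G -> (forall y, (0 <= G y)%E) -> iter_int (fun y => G (T y)) = iter_int G.
Arguments Inv {m}.
Definition PresPm m (T : 'rV[R]_m -> 'rV[R]_m) := forall dP (P : measurableType dP)
  dV (V : measurableType dV) (G : P -> 'rV[R]_m -> V), pm G -> pm (fun p y => G p (T y)).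
Arguments PresPm {m}.
Definition Good m (T : 'rV[R]_m -> 'rV[R]_m) := PresPm T /\ Inv T.
Arguments Good {m}.

Lemma Good_comp m (T1 T2 : 'rV[R]_m -> 'rV[R]_m) :
  Good T1 -> Good T2 -> Good (fun y => T1 (T2 y)).
Proof.
move=> [P1 I1] [P2 I2]; split.
  by move=> dP P dV V G hG; apply: (P2 _ _ _ _ (fun p y => G p (T1 y))); exact: P1.
move=> G hG G0.
rewrite (I2 (fun y => G (T1 y))); first exact: I1.
  exact: (P1 _ _ _ _ (fun _ y => G y)).
by move=> y; exact: G0.
Qed.

Definition liftT {m} (T : 'rV[R]_m -> 'rV[R]_m) (y : 'rV[R]_(m.+1)) : 'rV[R]_(m.+1) :=
  rc0 (hd y) (T (tl y)).

Lemma liftT_rc0 m (T : 'rV[R]_m -> 'rV[R]_m) x w : liftT T (rc0 x w) = rc0 x (T w).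
Proof. by rewrite /liftT hd_rc0 tl_rc0. Qed.

Lemma tpm_rc0 m (G : 'rV[R]_(m.+1) -> \bar R) x : tpm G -> tpm (fun w => G (rc0 x w)).
Proof.
move=> hG; rewrite /tpm.
have := @pm_compP m _ (measurableTypeR R * measurableTypeR R)%type _ (measurableTypeR R) _ _
  (fun p : measurableTypeR R => (p, x)) (fun pq w => G (rc0 pq.2 w)).
apply => //; apply: measurable_fun_pair => //; exact: measurable_cst.
Qed.

Lemma Good_lift m (T : 'rV[R]_m -> 'rV[R]_m) : Good T -> Good (liftT T).
Proof.
move=> [PT IT]; split.
  move=> dP P dV V G; rewrite /= => hG.
  have -> : (fun pq (w : 'rV[R]_m) => G pq.1 (liftT T (rc0 pq.2 w))) =
            (fun pq w => (fun pq w => G pq.1 (rc0 pq.2 w)) pq (T w)).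
    by apply/funext => pq; apply/funext => w; rewrite liftT_rc0.
  exact: (PT _ _ _ _ (fun (pq : P * measurableTypeR R) w => G pq.1 (rc0 pq.2 w)) hG).
move=> G hG G0; rewrite !iter_intS.
apply: eq_integral => x _.
rewrite -(IT (fun w => G (rc0 x w))) //; last exact: tpm_rc0.
by congr iter_int; apply/funext => w; rewrite liftT_rc0.
Qed.


Definition swap01 {m} (y : 'rV[R]_(m.+2)) : 'rV[R]_(m.+2) :=
  rc0 (hd (tl y)) (rc0 (hd y) (tl (tl y))).
Definition shear01 {m} (c : R) (y : 'rV[R]_(m.+2)) : 'rV[R]_(m.+2) :=
  rc0 (hd y) (rc0 (hd (tl y) + c * hd y) (tl (tl y))).

Lemma swap01_rc0 m a b (w : 'rV[R]_m) : swap01 (rc0 a (rc0 b w)) = rc0 b (rc0 a w).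
Proof. by rewrite /swap01 !tl_rc0 !hd_rc0. Qed.
Lemma shear01_rc0 m c a b (w : 'rV[R]_m) :
  shear01 c (rc0 a (rc0 b w)) = rc0 a (rc0 (b + c * a) w).
Proof. by rewrite /shear01 !tl_rc0 !hd_rc0. Qed.

Lemma tpm_H m (G : 'rV[R]_(m.+2) -> \bar R) : tpm G ->
  pm (fun (ab : measurableTypeR R * measurableTypeR R) w => G (rc0 ab.1 (rc0 ab.2 w))).
Proof.
move=> hG.
have := @pm_compP m _ ((measurableTypeR R * measurableTypeR R) * measurableTypeR R)%type _
  (measurableTypeR R * measurableTypeR R)%type _ _
  (fun ab : measurableTypeR R * measurableTypeR R => ((0 : R, ab.1), ab.2))
  (fun pqr w => G (rc0 pqr.1.2 (rc0 pqr.2 w))).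
apply => //.
by apply: measurable_fun_pair => //; apply: measurable_fun_pair => //.
Qed.

Local Open Scope ereal_scope.

Lemma Good_swap01 m : Good (@swap01 m).
Proof.
split.
  move=> dP P dV V G; rewrite /= => hG.
  apply: (@pm_re _ _ _ _ _ _ _ (fun pqr : P * measurableTypeR R * measurableTypeR R =>
     ((pqr.1.1, pqr.2), pqr.1.2)) _ _ _ _ hG).
    apply: measurable_fun_pair; last exact: (measurableT_comp measurable_snd measurable_fst).
    apply: measurable_fun_pair; last exact: measurable_snd.
    exact: (measurableT_comp measurable_fst measurable_fst).
  by move=> q w /=; rewrite swap01_rc0.
move=> G hG G0.
pose H := fun ab : measurableTypeR R * measurableTypeR R =>
  iter_int (fun w => G (rc0 ab.1 (rc0 ab.2 w))).
have mH : measurable_fun setT H.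
  apply: iter_int_meas; first exact: tpm_H.
  by move=> ? ?; exact: G0.
have H0 : forall ab, 0 <= H ab by move=> ab; apply: iter_int_ge0 => w; exact: G0.
have -> : iter_int (fun y => G (swap01 y)) = \int[mu]_a \int[mu]_b H (b, a).
  rewrite iter_intS; apply: eq_integral => a _.
  rewrite iter_intS; apply: eq_integral => b _.
  by rewrite /H /=; congr iter_int; apply/funext => w; rewrite swap01_rc0.
rewrite -(fubini_tonelli (m1 := mu) (m2 := mu) H mH H0).
by [].
Qed.

Lemma Good_shear01 m c : Good (@shear01 m c).
Proof.
split.
  move=> dP P dV V G; rewrite /= => hG.
  apply: (@pm_re _ _ _ _ _ _ _ (fun pqr : P * measurableTypeR R * measurableTypeR R =>
     (((pqr.1.1, pqr.1.2), (pqr.2 + c * pqr.1.2)%R) : P * measurableTypeR R * measurableTypeR R)) _ _ _ _ hG).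
    apply: measurable_fun_pair.
      apply: measurable_fun_pair.
        exact: (measurableT_comp measurable_fst measurable_fst).
      exact: (measurableT_comp measurable_snd measurable_fst).
    apply: measurable_realfun.measurable_funD; first exact: measurable_snd.
    apply: measurable_realfun.measurable_funM; first exact: measurable_cst.
    exact: (measurableT_comp measurable_snd measurable_fst).
  by move=> q w /=; rewrite shear01_rc0.
move=> G hG G0.
pose H := fun ab : measurableTypeR R * measurableTypeR R =>
  iter_int (fun w => G (rc0 ab.1 (rc0 ab.2 w))).
have mH : measurable_fun setT H.
  apply: iter_int_meas; first exact: tpm_H.
  by move=> ? ?; exact: G0.
have H0 : forall ab, 0 <= H ab by move=> ab; apply: iter_int_ge0 => w; exact: G0.
have -> : iter_int (fun y => G (shear01 c y)) = \int[mu]_a \int[mu]_b H (a, (b + c * a)%R).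
  rewrite iter_intS; apply: eq_integral => a _.
  rewrite iter_intS; apply: eq_integral => b _.
  by rewrite /H /=; congr iter_int; apply/funext => w; rewrite shear01_rc0.
rewrite iter_intS; apply: eq_integral => a _.
rewrite (@integral_shift R (c * a)%R (fun b => H (a, b))) //.
apply: (measurableT_comp mH); apply: measurable_fun_pair => //; exact: measurable_cst.
Qed.

End Infra.
Arguments rc0 {R m}. Arguments hd {R m}. Arguments tl {R m}. Arguments swap01 {R m}.
Arguments shear01 {R m}. Arguments liftT {R m}. Arguments Good {R m}. Arguments Inv {R m}.
Arguments PresPm {R m}. Arguments tpm {R m}. Arguments pm {R m dP P dV V}.


Section Rot.
Variable R : realType.

Lemma dotp_rc0 m a b (u w : 'rV[R]_m) : dotp (rc0 a u) (rc0 b w) = a * b + dotp u w.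
Proof. by rewrite /dotp big_ord_recl !rc0_ord0; congr (_ + _); apply: eq_bigr => i _; rewrite !rc0_lift. Qed.

Lemma sqnorm_rc0 m a (w : 'rV[R]_m) : sqnorm (rc0 a w) = a ^+ 2 + sqnorm w.
Proof. by rewrite /sqnorm dotp_rc0 expr2. Qed.

Lemma scale_rc0 m k a (w : 'rV[R]_m) : k *: rc0 a w = rc0 (k * a) (k *: w).
Proof.
apply/rowP => i; rewrite mxE.
case: (unliftP ord0 i) => [j ->|->]; first by rewrite !rc0_lift mxE.
by rewrite !rc0_ord0.
Qed.

Lemma dotpZr m k (z y : 'rV[R]_m) : dotp z (k *: y) = k * dotp z y.
Proof. rewrite /dotp mulr_sumr; apply: eq_bigr => i _; rewrite mxE; ring. Qed.

Lemma rcE m (y : 'rV[R]_(m.+1)) : exists a w, y = rc0 a w.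
Proof. by exists (hd y), (tl y); rewrite rc0_hd_tl. Qed.

Definition rot01 {m} (c s : R) (y : 'rV[R]_(m.+2)) : 'rV[R]_(m.+2) :=
  rc0 (c * hd y - s * hd (tl y)) (rc0 (s * hd y + c * hd (tl y)) (tl (tl y))).

Lemma rot01_rc0 m c s a b (w : 'rV[R]_m) :
  rot01 c s (rc0 a (rc0 b w)) = rc0 (c * a - s * b) (rc0 (s * a + c * b) w).
Proof. by rewrite /rot01 !tl_rc0 !hd_rc0. Qed.

Lemma Good_id m : Good (fun y : 'rV[R]_m => y).
Proof. by split => //. Qed.

Lemma Good_ext m (T1 T2 : 'rV[R]_m -> 'rV[R]_m) : (forall y, T1 y = T2 y) -> Good T1 -> Good T2.
Proof. by move=> E; have -> : T2 = T1 by apply/funext => y; rewrite E. Qed.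

Lemma Good_rot01 m c s : s != 0 -> c ^+ 2 + s ^+ 2 = 1 -> Good (@rot01 m c s).
Proof.
move=> s0 cs.
pose a := (c - 1) / s.
pose U := fun y : 'rV[R]_(m.+2) => swap01 (shear01 a (swap01 y)).
have GU : Good U.
  apply: Good_comp; first exact: Good_swap01.
  apply: Good_comp; first exact: Good_shear01.
  exact: Good_swap01.
have G := Good_comp GU (Good_comp (Good_shear01 m s) GU).
apply: Good_ext G => y.
have [p [w ->]] := rcE y; have [q [w' ->]] := rcE w.
rewrite /U; do 8 (rewrite ?swap01_rc0 ?shear01_rc0 ?hd_rc0 ?tl_rc0); rewrite rot01_rc0.
have as_ : a * s = c - 1 by rewrite /a divfK.
have k : 2 * a + a ^+ 2 * s = - s.
  apply: (mulfI s0).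
  have -> : s * (2 * a + a ^+ 2 * s) = 2 * (a * s) + (a * s) ^+ 2 by ring.
  rewrite as_.
  have -> : 2 * (c - 1) + (c - 1) ^+ 2 = (c ^+ 2 + s ^+ 2) - 1 - s ^+ 2 by ring.
  by rewrite cs subrr; ring.
congr rc0.
  have -> : p + a * q + a * (q + s * (p + a * q)) = p * (1 + a * s) + q * (2 * a + a ^+ 2 * s) by ring.
  by rewrite k as_; ring.
congr rc0.
have -> : q + s * (p + a * q) = s * p + q * (1 + a * s) by ring.
by rewrite as_; ring.
Qed.


Definition Iso {m} (T : 'rV[R]_m -> 'rV[R]_m) :=
  (forall y, sqnorm (T y) = sqnorm y) /\ (forall k y, T (k *: y) = k *: T y).

Lemma Iso_lift m (T : 'rV[R]_m -> 'rV[R]_m) : Iso T -> Iso (liftT T).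
Proof.
move=> [h1 h2]; split.
  by move=> y; have [b [w ->]] := rcE y; rewrite liftT_rc0 !sqnorm_rc0 h1.
by move=> k y; have [b [w ->]] := rcE y; rewrite scale_rc0 !liftT_rc0 h2 scale_rc0.
Qed.

Lemma Iso_comp m (T1 T2 : 'rV[R]_m -> 'rV[R]_m) : Iso T1 -> Iso T2 -> Iso (fun y => T1 (T2 y)).
Proof.
move=> [a1 b1] [a2 b2]; split; first by move=> y; rewrite a1 a2.
by move=> k y; rewrite b2 b1.
Qed.

Lemma Iso_rot01 m c s : c ^+ 2 + s ^+ 2 = 1 -> Iso (@rot01 m c s).
Proof.
move=> cs; split.
  move=> y; have [b [w ->]] := rcE y; have [b' [w' ->]] := rcE w.
  rewrite rot01_rc0 !sqnorm_rc0 !addrA; congr (_ + _).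
  have -> : (c * b - s * b') ^+ 2 + (s * b + c * b') ^+ 2 = (c ^+ 2 + s ^+ 2) * (b ^+ 2 + b' ^+ 2) by ring.
  by rewrite cs mul1r.
move=> k y; have [b [w ->]] := rcE y; have [b' [w' ->]] := rcE w.
rewrite (scale_rc0 k b (rc0 b' w')) (scale_rc0 k b' w') !rot01_rc0.
rewrite scale_rc0 scale_rc0; congr rc0; first ring.
by congr rc0; ring.
Qed.

Lemma claim n (z : 'rV[R]_(n.+1)) : exists T : 'rV[R]_(n.+1) -> 'rV[R]_(n.+1),
  [/\ Good T, Iso T & exists rho, rho ^+ 2 = sqnorm z /\ forall y, dotp z (T y) = rho * hd y].
Proof.
elim: n z => [|n IH] z.
  exists (fun y => y); split; first exact: Good_id.
    by split.
  have [a [w ->]] := rcE z; exists a; split.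
    by rewrite sqnorm_rc0 /sqnorm /dotp big_ord0 addr0.
  move=> y; have [b [w' ->]] := rcE y.
  by rewrite dotp_rc0 hd_rc0 /dotp big_ord0 addr0.
have [a [z' ->]] := rcE z.
have [T' [GT' IT' [rho' [erho' drho']]]] := IH z'.
have G1 := Good_lift GT'; have I1 := Iso_lift IT'.
have d1 : forall b w, dotp (rc0 a z') (liftT T' (rc0 b w)) = a * b + rho' * hd w.
  by move=> b w; rewrite liftT_rc0 dotp_rc0 drho'.
have [r0|r0] := eqVneq rho' 0.
  exists (liftT T'); split => //; exists a; split.
    by rewrite sqnorm_rc0 -erho' r0 expr0n /= addr0.
  by move=> y; have [b [w ->]] := rcE y; rewrite d1 r0 mul0r addr0 hd_rc0.
pose rho := Num.sqrt (a ^+ 2 + rho' ^+ 2).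
have rho2 : rho ^+ 2 = a ^+ 2 + rho' ^+ 2 by rewrite sqr_sqrtr // addr_ge0 // sqr_ge0.
have rpos : 0 < rho.
  have h : 0 < rho' ^+ 2 by rewrite lt0r sqr_ge0 sqrf_eq0 r0.
  by rewrite sqrtr_gt0; exact: ltr_wpDl (sqr_ge0 a) h.
have rn0 : rho != 0 by rewrite gt_eqF.
pose c := a / rho; pose s := rho' / rho.
have s0 : s != 0 by rewrite mulf_neq0 // invr_eq0.
have cs : c ^+ 2 + s ^+ 2 = 1.
  rewrite /c /s !expr_div_n -mulrDl -rho2 divff //; exact: expf_neq0.
exists (fun y => liftT T' (rot01 c s y)); split.
- exact: Good_comp G1 (Good_rot01 _ s0 cs).
- exact: Iso_comp I1 (@Iso_rot01 n c s cs).
exists rho; split; first by rewrite rho2 sqnorm_rc0 erho'.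
move=> y; have [b [w ->]] := rcE y; have [b' [w' ->]] := rcE w.
rewrite rot01_rc0 d1 !hd_rc0 /c /s.
have -> : a * (a / rho * b - rho' / rho * b') + rho' * (rho' / rho * b + a / rho * b')
   = (a ^+ 2 + rho' ^+ 2) / rho * b by field.
by rewrite -rho2; field.
Qed.

End Rot.


Section Sph.
Variable R : realType.

Lemma measurable_inv : measurable_fun setT (fun x : R => x^-1).
Proof.
have -> : (fun x : R => x^-1) = fun x => if x == 0 then 0 else x^-1.
  by apply/funext => x; case: eqP => // ->; rewrite invr0.
apply: measurable_fun_if => //.
- apply: measurable_realfun.measurable_fun_eqr => //; exact: measurable_cst.
have -> : (setT `&` (eq_op^~ 0) @^-1` [set false]) = [set x : R | x != 0].
  by apply/seteqP; split => x /=; rewrite ?setTI //=; case: (x == 0) => //= [[]]//.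
apply: open_continuous_measurable_fun; first exact: open_neq.
move=> x; rewrite inE /= => x0; exact: inv_continuous.
Qed.


Lemma pm_ext m dP (P : measurableType dP) dV (V : measurableType dV)
  (G1 G2 : P -> 'rV[R]_m -> V) : pm G1 -> (forall p y, G2 p y = G1 p y) -> pm G2.
Proof.
move=> h E; have -> : G2 = G1 by apply/funext => p; apply/funext => y; exact: E.
exact: h.
Qed.

Lemma pm_sum m dP (P : measurableType dP) (I : Type) (s : seq I)
  (F : I -> P -> 'rV[R]_m -> R) :
  (forall i, pm (F i)) -> pm (fun p y => \sum_(i <- s) F i p y).
Proof.
move=> hF; elim: s => [|i s IH].
  apply: (pm_ext (G1 := fun (_ : P) (_ : 'rV[R]_m) => (0 : R))); first by apply: pm_cst; exact: measurable_cst.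
  by move=> p y; rewrite big_nil.
apply: (pm_ext (G1 := fun p y => F i p y + \sum_(j <- s) F j p y)); last first.
  by move=> p y; rewrite big_cons.
apply: (pm_map2 (op := fun u v : R => u + v)) => //.
move=> dQ Q f g mf mg; exact: measurable_realfun.measurable_funD.
Qed.

Lemma pm_mul m dP (P : measurableType dP) (F1 F2 : P -> 'rV[R]_m -> R) :
  pm F1 -> pm F2 -> pm (fun p y => F1 p y * F2 p y).
Proof.
apply: (pm_map2 (op := fun u v : R => u * v)).
move=> dQ Q f g mf mg; exact: measurable_realfun.measurable_funM.
Qed.

Lemma pm_dotp m dP (P : measurableType dP) (z : 'rV[R]_m) : pm (fun (p : P) y => dotp z y).
Proof.
apply: pm_sum => i; apply: pm_mul; last exact: pm_coord.
apply: pm_cst; exact: measurable_cst.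
Qed.

Lemma pm_sqnorm m dP (P : measurableType dP) : pm (fun (p : P) (y : 'rV[R]_m) => sqnorm y).
Proof. apply: pm_sum => i; apply: pm_mul; exact: pm_coord. Qed.

Lemma radprojE m (y : 'rV[R]_m) : radproj y = (Num.sqrt (sqnorm y))^-1 *: y.
Proof. by []. Qed.

Lemma tpm_Fz d t (z : 'rV[R]_(d.+1)) :
  tpm (fun y => if `[< unit_ball y >] then ((dotp z (radproj y)) ^+ (2 * t))%:E else 0%E).
Proof.
rewrite /tpm.
have -> : (fun (_ : measurableTypeR R) (y : 'rV[R]_(d.+1)) =>
     if `[< unit_ball y >] then ((dotp z (radproj y)) ^+ (2 * t))%:E else 0%E) =
   (fun _ y => (fun (u : R) (v : \bar R) => if u <= 1 then v else 0%E) (sqnorm y)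
      (EFin (((Num.sqrt (sqnorm y))^-1 * dotp z y) ^+ (2 * t)))).
  apply/funext => p; apply/funext => y.
  by rewrite /unit_ball /= asboolb radprojE dotpZr.
apply: (pm_map2 (op := fun (u : R) (v : \bar R) => if u <= 1 then v else 0%E)); last first.
- apply: (pm_map (h := EFin)); first exact: EFin_measurable.
  apply: (pm_map (h := fun x : R => x ^+ (2 * t))); first exact: exprn_measurable.
  apply: pm_mul; last exact: pm_dotp.
  apply: (pm_map (h := fun u : R => (Num.sqrt u)^-1)); last exact: pm_sqnorm.
  apply: (measurableT_comp measurable_inv).
  apply: continuous_measurable_fun; exact: sqrt_continuous.
- exact: pm_sqnorm.
move=> dQ Q f g mf mg /=.
apply: measurable_fun_ifT.
- by apply: measurable_realfun.measurable_fun_ler => //; exact: measurable_cst.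
- exact: mg.
- exact: measurable_cst.
Qed.


Lemma sphere_int_T d (g : 'rV[R]_(d.+1) -> \bar R) (T : 'rV[R]_(d.+1) -> 'rV[R]_(d.+1)) :
  Good T -> Iso T ->
  tpm (fun y => if `[< unit_ball y >] then g (radproj y) else 0%E) ->
  (forall y, (0 <= g y)%E) ->
  sphere_int d (fun y => g (T y)) = sphere_int d g.
Proof.
move=> [PT IT] [I1 I2] hF g0; rewrite /sphere_int; congr (_ * _)%E.
rewrite -(IT _ hF); last by move=> y; case: asboolP => // _; exact: g0.
congr iter_int; apply/funext => y.
by rewrite /unit_ball /= I1 !radprojE I1 I2.
Qed.

Lemma Phi d t (z : 'rV[R]_(d.+1)) : sqnorm z = 1 ->
  sphere_int d (fun y => ((dotp z y) ^+ (2 * t))%:E) =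
  sphere_int d (fun y => ((hd y) ^+ (2 * t))%:E).
Proof.
move=> z1; have [T [GT IT [rho [e1 e2]]]] := claim z.
rewrite -(sphere_int_T GT IT (tpm_Fz t z)); last first.
  by move=> y; rewrite lee_fin exprM exprn_ge0 // sqr_ge0.
congr sphere_int; apply/funext => y.
by rewrite e2 exprMn exprM e1 z1 expr1n mul1r.
Qed.

End Sph.


Section Poly.
Variable R : realType.

Definition linp d (v : 'rV[R]_(d.+1)) : {mpoly R[d.+1]} :=
  \sum_(i < d.+1) v 0 i *: 'X_i.

Lemma msize_linp d v : (msize (linp (d:=d) v) <= 2)%N.
Proof.
apply: leq_trans (msize_sum _ _ _) _.
apply/bigmax_leqP => i _.
by apply: leq_trans (msizeZ_le _ _) _; rewrite msizeX mdeg1.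
Qed.

Lemma msize_pow d (p : {mpoly R[d.+1]}) k : (msize p <= 2)%N -> (msize (p ^+ k) <= k.+1)%N.
Proof.
move=> hp; elim: k => [|k IH]; first by rewrite expr0 msize1.
rewrite exprS.
have [->|p0] := eqVneq p 0; first by rewrite mul0r msize0.
have [->|q0] := eqVneq (p ^+ k) 0; first by rewrite mulr0 msize0.
rewrite msizeM //.
have : (msize p + msize (p ^+ k) <= k.+3)%N by rewrite -addn2 addnC leq_add.
by case: (msize p + msize (p ^+ k))%N => //= n; rewrite ltnS.
Qed.

Lemma peval_linp d (v y : 'rV[R]_(d.+1)) : peval (linp v) y = dotp v y.
Proof.
rewrite /peval /linp /dotp raddf_sum /=; apply: eq_bigr => i _.
by rewrite mevalZ mevalXU.
Qed.

Lemma peval_pow d (p : {mpoly R[d.+1]}) k y : peval (p ^+ k) y = (peval p y) ^+ k.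
Proof.
elim: k => [|k IH]; first by rewrite !expr0 /peval meval1.
by rewrite !exprS -IH /peval mevalM.
Qed.

End Poly.


Section Geo.
Variable R : realType.

Lemma dotpC n (u w : 'rV[R]_n) : dotp u w = dotp w u.
Proof. by apply: eq_bigr => i _; rewrite mulrC. Qed.

Lemma dotpDl n (u w y : 'rV[R]_n) : dotp (u + w) y = dotp u y + dotp w y.
Proof. by rewrite /dotp -big_split; apply: eq_bigr => i _; rewrite mxE mulrDl. Qed.

Lemma dotpZl n k (u y : 'rV[R]_n) : dotp (k *: u) y = k * dotp u y.
Proof. by rewrite dotpC dotpZr dotpC. Qed.

Lemma dotpDr n (u w y : 'rV[R]_n) : dotp y (u + w) = dotp y u + dotp y w.
Proof. by rewrite dotpC dotpDl !(dotpC y). Qed.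

Lemma sqnorm_ge0 n (y : 'rV[R]_n) : 0 <= sqnorm y.
Proof. by apply: sumr_ge0 => i _; rewrite -expr2 sqr_ge0. Qed.

Lemma dotp0r n (y : 'rV[R]_n) : dotp y 0 = 0.
Proof. by apply: big1 => i _; rewrite mxE mulr0. Qed.

Lemma bessel n (x v y : 'rV[R]_n) : sqnorm x = 1 -> sqnorm v = 1 -> dotp x v = 0 ->
  (dotp x y) ^+ 2 + (dotp v y) ^+ 2 <= sqnorm y.
Proof.
move=> x1 v1 xv.
set al := dotp x y; set be := dotp v y.
have h := sqnorm_ge0 (y + (- al) *: x + (- be) *: v).
have E : sqnorm (y + (- al) *: x + (- be) *: v) = sqnorm y - al ^+ 2 - be ^+ 2.
  rewrite /sqnorm !dotpDl !dotpDr !dotpZl !dotpZr.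
  rewrite (dotpC y x) (dotpC y v) (dotpC v x) -/al -/be.
  move: x1 v1; rewrite /sqnorm => -> ->; rewrite xv; ring.
by move: h; rewrite E; lra.
Qed.

Lemma exists_orth d (x : 'rV[R]_(d.+2)) : exists v : 'rV[R]_(d.+2), sqnorm v = 1 /\ dotp x v = 0.
Proof.
have [a [w ->]] := rcE x; have [b [w' ->]] := rcE w.
have [ab0|ab0] := eqVneq (a ^+ 2 + b ^+ 2) 0.
  have a0 : a = 0 by apply/eqP; rewrite -sqrf_eq0; move/eqP: ab0; rewrite paddr_eq0 ?sqr_ge0 // => /andP[]. 
  have b0 : b = 0 by apply/eqP; rewrite -sqrf_eq0; move/eqP: ab0; rewrite paddr_eq0 ?sqr_ge0 // => /andP[].
  exists (rc0 1 (rc0 0 0)); split.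
    by rewrite !sqnorm_rc0 /sqnorm dotp0r; ring.
  by rewrite !dotp_rc0 dotp0r a0 b0; ring.
pose rho := Num.sqrt (a ^+ 2 + b ^+ 2).
have rho2 : rho ^+ 2 = a ^+ 2 + b ^+ 2 by rewrite sqr_sqrtr // addr_ge0 // sqr_ge0.
have rn0 : rho != 0.
  by apply/eqP => r0; move: rho2; rewrite r0 expr0n /= => /esym/eqP; rewrite (negbTE ab0).
exists (rc0 (b / rho) (rc0 (- a / rho) 0)); split.
  rewrite !sqnorm_rc0 /sqnorm dotp0r addr0.
  have -> : (b / rho) ^+ 2 + (- a / rho) ^+ 2 = (a ^+ 2 + b ^+ 2) / rho ^+ 2 by field.
  by rewrite -rho2 divff // expf_neq0.
rewrite !dotp_rc0 dotp0r; field => //.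
Qed.

End Geo.


Section Topo.
Variable R : realType.

Lemma cont_sum n (I : Type) (s : seq I) (F : I -> 'rV[R]_n -> R) :
  (forall i, continuous (F i)) -> continuous (fun y => \sum_(i <- s) F i y).
Proof.
move=> hF; elim: s => [|i s IH].
  have -> : (fun y : 'rV[R]_n => \sum_(i <- [::]) F i y) = fun _ => 0.
    by apply/funext => y; rewrite big_nil.
  exact: cst_continuous.
have -> : (fun y : 'rV[R]_n => \sum_(j <- i :: s) F j y) = (F i + (fun y => \sum_(j <- s) F j y)).
  by apply/funext => y; rewrite big_cons.
by move=> y; apply: continuousD; [exact: hF | exact: IH].
Qed.

Lemma cont_dotp n (z : 'rV[R]_n) : continuous (fun y : 'rV[R]_n => dotp z y).
Proof.
apply: cont_sum => i y; apply: (@continuousM _ _ (fun _ => z 0 i) (fun y : 'rV[R]_n => y 0 i)).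
  exact: cst_continuous.
exact: coord_continuous.
Qed.

Lemma cont_sqnorm n : continuous (fun y : 'rV[R]_n => sqnorm y).
Proof.
apply: cont_sum => i y; apply: (@continuousM _ _ (fun y : 'rV[R]_n => y 0 i) (fun y : 'rV[R]_n => y 0 i));
  exact: coord_continuous.
Qed.

Lemma open_meas d (A : set 'rV[R]_(d.+1)) : open A -> measurable (A : set (Rsp R d)).
Proof. by move=> oA; apply: sub_gen_smallest. Qed.

Lemma cont_meas d (f : 'rV[R]_(d.+1) -> R) : continuous f ->
  measurable_fun setT (f : Rsp R d -> R).
Proof.
move=> cf; apply: (measurability _ (RGenOInfty.measurableE R)).
move=> _ [_ [a ->] <-]; rewrite setTI.
apply: open_meas.
have -> : f @^-1` `]a, +oo[%classic = f @^-1` [set x | a < x].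
  by apply/seteqP; split => y /=; rewrite in_itv /= andbT.
by apply: (proj1 (continuousP f)) => //; exact: open_gt.
Qed.


Lemma sphere_closed d : closed (sphere d : set 'rV[R]_(d.+1)).
Proof.
have -> : (sphere d : set 'rV[R]_(d.+1)) = (fun y => sqnorm y) @^-1` [set x | x = 1] by [].
apply: preimage_closed; last exact: closed_eq.
move=> y _; exact: cont_sqnorm.
Qed.

Lemma coord_le1 n (y : 'rV[R]_n) i : sqnorm y = 1 -> (y 0 i) ^+ 2 <= 1.
Proof.
move=> <-; rewrite /sqnorm /dotp (bigD1 i) //= -expr2 lerDl.
by apply: sumr_ge0 => j _; rewrite -expr2 sqr_ge0.
Qed.

Lemma sphere_compact d : compact (sphere d : set 'rV[R]_(d.+1)).
Proof.
have K := @rV_compact R d.+1 (fun=> `[(-1 : R), 1]%classic) (fun _ => @segment_compact R (-1) 1).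
apply: subclosed_compact; [exact: sphere_closed | exact: K | ].
move=> y /= y1 i; rewrite /= in_itv /=.
have := coord_le1 i y1; rewrite (_ : ord0 = 0) //.
move=> h; apply/andP; split; nra.
Qed.

Lemma negligible_seq d (mu : {measure set (Rsp R d) -> \bar R}) (s : seq (set 'rV[R]_(d.+1))) :
  (forall U, U \in s -> mu.-negligible (U : set (Rsp R d))) ->
  mu.-negligible ([set y | exists2 U, U \in s & U y] : set (Rsp R d)).
Proof.
elim: s => [|U s IH] h.
  apply: (negligibleS _ (negligible_set0 mu)) => y [U]; by rewrite in_nil.
apply: (negligibleS (A := (U `|` [set y | exists2 V, V \in s & V y]) : set (Rsp R d))).
  by move=> y [V]; rewrite in_cons => /orP[/eqP -> |Vs Vy]; [left|right; exists V].
apply: negligibleU; first by apply: h; rewrite mem_head.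
by apply: IH => V Vs; apply: h; rewrite in_cons Vs orbT.
Qed.


Lemma neg_out d (mu : {measure set (Rsp R d) -> \bar R}) (x : 'rV[R]_(d.+1)) (r : R) :
  msupport mu `<=` cap d r x ->
  mu.-negligible ([set y | sphere d y /\ dotp x y < cos r] : set (Rsp R d)).
Proof.
move=> hsupp.
pose Kn (n : nat) := [set y : 'rV[R]_(d.+1) | sphere d y /\ dotp x y <= cos r - (n.+1)%:R^-1].
have KnN n : mu.-negligible (Kn n : set (Rsp R d)).
  have Kc : compact (Kn n).
    have Sc : compact (sphere d : set 'rV[R]_(d.+1)) := @sphere_compact d.
    apply: subclosed_compact; [|exact: Sc|by move=> y []].
    have -> : Kn n = (sphere d : set 'rV[R]_(d.+1)) `&`
        ((fun y => dotp x y) @^-1` [set z | z <= cos r - (n.+1)%:R^-1]) by [].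
    apply: closedI; first exact: sphere_closed.
    apply: preimage_closed; last exact: closed_le.
    move=> y _; exact: cont_dotp.
  move: Kc; rewrite compact_cover => /(_ (set 'rV[R]_(d.+1))
     [set U | open U /\ mu U = 0%E] id) [].
  - by move=> U [].
  - move=> y [Sy hy].
    have nsupp : ~ msupport mu y.
      move=> /hsupp [_ /= hc]; move: hy; rewrite leNgt => /negP; apply.
      by apply: lt_le_trans hc; rewrite ltrBlDr ltrDl invr_gt0 ltr0n.
    move: nsupp; rewrite /msupport /= => /existsNP [U] /not_implyP [oU] /not_implyP [Uy nU].
    exists U => //; split => //.
    apply/eqP; rewrite eq_le measure_ge0 andbT leNgt; apply/negP => h; exact: nU.
  move=> D' D'sub cov.
  pose A := [set y : 'rV[R]_(d.+1) | exists2 U, U \in finmap.enum_fset D' & U y].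
  have hA : mu.-negligible (A : set (Rsp R d)).
    apply: negligible_seq => U UD'.
    have := D'sub U UD'; rewrite inE => -[oU mU0].
    by exists U; split => //; exact: open_meas.
  apply: (@negligibleS _ _ _ mu A (Kn n)) => //.
apply: (negligibleS (A := \bigcup_n (Kn n : set (Rsp R d)))); last exact: negligible_bigcup.
move=> y [Sy hy]; have [k hk] := ltr_add_invr hy.
by exists k => //; split => //; rewrite lerBrDr ltW.
Qed.

End Topo.

Section Fin.
Variable R : realType.

Lemma cap_bound n t (x v y : 'rV[R]_n) (r : R) : sqnorm x = 1 -> sqnorm v = 1 -> dotp x v = 0 ->
  0 <= cos r -> sqnorm y = 1 -> cos r <= dotp x y -> (dotp v y) ^+ (2 * t) <= (sin r) ^+ (2 * t).
Proof.
move=> x1 v1 xv c0 y1 hc.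
have B := bessel y x1 v1 xv; rewrite y1 in B.
have c2 : cos r ^+ 2 <= (dotp x y) ^+ 2 by nra.
have b2 : (dotp v y) ^+ 2 <= sin r ^+ 2 by rewrite sin2cos2; lra.
by rewrite !exprM; apply: lerXn2r; rewrite ?nnegrE ?sqr_ge0.
Qed.

Lemma meas_S d : measurable (sphere d : set (Rsp R d)).
Proof.
rewrite -[sphere d]setCK; apply: measurableC; apply: open_meas.
rewrite openC; exact: sphere_closed.
Qed.

Lemma Lambda_ge0 d t (x : 'rV[R]_(d.+1)) : (0 <= Lambda d t x)%E.
Proof.
rewrite /Lambda /sphere_int; apply: mule_ge0.
  rewrite lee_fin invr_ge0; apply: fine_ge0; apply: iter_int_ge0 => y.
  by case: asboolP.
apply: iter_int_ge0 => y; case: asboolP => // _.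
by rewrite lee_fin exprM exprn_ge0 // sqr_ge0.
Qed.

End Fin.

Unset Implicit Arguments.

Theorem lemma4p2 (R : realType) (d t : nat) (a r : R)
  (mu : {measure set (Rsp R d) -> \bar R})
  (x : 'rV[R]_(d.+1)) :
  (1 <= d)%N -> (1 <= t)%N ->
  (mu [set: Rsp R d] < +oo)%E ->
  mu (~` (sphere d : set (Rsp R d))) = 0%E ->
  0 < a -> lower_MZ d t a mu ->
  0 < r -> r <= pi / 2 ->
  sphere d x ->
  msupport mu `<=` cap d r x ->
  ((a / fine (mu (sphere d : set (Rsp R d))))%:E * Lambda d t x
     <= ((sin r) ^+ (2 * t))%:E)%E.
Proof.
move=> d1 t1 muT muC a0 MZ r0 rpi Sx supp.
destruct d as [|d']; first by [].
have [v [v1 xv]] := exists_orth x.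
pose p := linp v ^+ t.
have Pp : Pi_t d'.+1 t p by rewrite /Pi_t /=; exact: msize_pow (msize_linp v).
have Ep : (fun y => ((peval p y) ^+ 2)%:E) = (fun y => ((dotp v y) ^+ (2 * t))%:E :> \bar R).
  by apply/funext => y; rewrite peval_pow peval_linp -exprM mulnC.
have hMZ := MZ p Pp; rewrite Ep in hMZ.
have hL : sphere_int d'.+1 (fun y => ((dotp v y) ^+ (2 * t))%:E) = Lambda d'.+1 t x.
  by rewrite /Lambda (Phi t v1) (Phi t Sx).
rewrite hL in hMZ.
have cos0 : 0 <= cos r.
  apply: cos_ge0_pihalf; rewrite rpi andbT.
  have := @pi_gt0 R; lra.
set c := (sin r) ^+ (2 * t).
have c0 : 0 <= c by rewrite /c exprM exprn_ge0 // sqr_ge0.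
have hI : (\int[mu]_(y in (sphere d'.+1 : set (Rsp R d'.+1))) ((dotp v y) ^+ (2 * t))%:E
            <= c%:E * mu (sphere d'.+1 : set (Rsp R d'.+1)))%E.
  rewrite -integral_cst; last exact: meas_S.
  apply: ae_ge0_le_integral.
  - exact: meas_S.
  - by move=> y _; rewrite lee_fin exprM exprn_ge0 // sqr_ge0.
  - apply: measurable_funTS; apply/measurable_EFinP.
    apply: measurable_funX; apply: cont_meas; exact: cont_dotp.
  - by move=> y _; rewrite lee_fin.
  - exact: measurable_cst.
  apply: (negligibleS _ (neg_out supp)).
  move=> y /= /not_implyP [Sy hy]; split => //.
  rewrite ltNge; apply/negP => hc; apply: hy.
  rewrite lee_fin; exact: (cap_bound _ Sx v1 xv cos0 Sy hc).
have hle := le_trans hMZ hI.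
have L0 := Lambda_ge0 t x.
move: hle L0; set L := Lambda d'.+1 t x; set M := mu _ => hle L0.
have M0 : (0 <= M)%E by exact: measure_ge0.
have Mfin : (M < +oo)%E.
  apply: le_lt_trans muT; apply: le_measure; rewrite ?inE //; exact: meas_S.
have [m Me] : exists m, M = m%:E.
  by exists (fine M); rewrite fineK // ge0_fin_numE.
rewrite Me /= in hle M0 *.
have [m0|mn0] := eqVneq m 0.
  by rewrite m0 invr0 mulr0 mul0e lee_fin.
have mpos : 0 < m by rewrite lt0r mn0 -lee_fin.
move: L hle L0 => [l| |] hle L0.
- rewrite -!EFinM lee_fin in hle *.
  by rewrite lee_fin mulrAC ler_pdivrMr.
- by move: hle; rewrite muleC gt0_mulye ?lte_fin // leye_eq.
- by [].
Qed.
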